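(* Let $\mathcal{A}$ be a clone that admits no minion homomorphism to $\mathcal{P}$. Then there exists a finite graph $\mathbb{G}$ that is not 3-colorable such that $\mathcal{A}$ satisfies $\Sigma_{\mathbb{G}}$.
   Context: A graph is a structure $(V,E)$ with a single symmetric binary relation $E$ (loops allowed); it is 3-colorable if it admits a homomorphism to the complete loopless graph $\mathbb{K}_3$ on three vertices. A clone on a set $A$ is a set of finitary operations on $A$ containing all projections and closed under composition; $\mathcal{P}$ is the clone of projections on $\{0,1\}$. A minion homomorphism between clones $\mathcal{A}\to\mathcal{B}$ is an arity-preserving map $\xi$ such that for all $n$-ary $f\in\mathcal{A}$ and all $\pi:\{1,\dots,n\}\to\{1,\dots,k\}$, $\xi$ maps $(x_1,\dots,x_k)\mapsto f(x_{\pi(1)},\dots,x_{\pi(n)})$ to $(x_1,\dots,x_k)\mapsto \xi(f)(x_{\pi(1)},\dots,x_{\pi(n)})$. A clone satisfies a height 1 condition (finite set of universally quantified identities $f(x_{\pi(1)},\dots,x_{\pi(n)})\approx g(x_{\rho(1)},\dots,x_{\rho(m)})$) if its symbols can be assigned functions of the clone of the right arities making all identities true. For a finite graph $\mathbb{G}=(V,E)$, $\Sigma_{\mathbb{G}}$ is the height 1 condition with a ternary symbol $f_v$ for each $v\in V$, a $6$-ary symbol $g_{(u,v)}$ for each $(u,v)\in E$, and, for each $(u,v)\in E$, the identities $f_u(x,y,z)\approx g_{(u,v)}(x,y,x,z,y,z)$ and $f_v(x,y,z)\approx g_{(u,v)}(y,x,z,x,z,y)$. *)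

(* Defs.v *)
From mathcomp Require Import all_boot.
Set Implicit Arguments. Unset Strict Implicit. Unset Printing Implicit Defensive.

Definition op (A : Type) (n : nat) := ('I_n -> A) -> A.

Definition opset (A : Type) := forall n : nat, op A n -> Prop.

Definition is_clone (A : Type) (C : opset A) : Prop :=
  (forall (n : nat) (i : 'I_n), C n (fun x => x i)) /\
  (forall (n m : nat) (f : op A n) (g : 'I_n -> op A m),
      C n f -> (forall i, C m (g i)) -> C m (fun x => f (fun i => g i x))).

Definition minor (A : Type) (n k : nat) (pi : 'I_n -> 'I_k) (f : op A n) : op A k :=
  fun x => f (fun i => x (pi i)).

Definition minion_hom (A B : Type) (C : opset A) (D : opset B)
  (xi : forall n, op A n -> op B n) : Prop :=
  (forall n f, C n f -> D n (xi n f)) /\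
  (forall (n k : nat) (pi : 'I_n -> 'I_k) (f : op A n), C n f ->
     forall x : 'I_k -> B, xi k (minor pi f) x = minor pi (xi n f) x).

Definition proj_clone : opset bool :=
  fun n f => exists i : 'I_n, forall x, f x = x i.

(* A finite graph on vertex set 'I_n: symmetric relation, loops allowed. *)
Definition graph_sym (n : nat) (E : rel 'I_n) : Prop := forall u v, E u v -> E v u.

Definition three_colorable (n : nat) (E : rel 'I_n) : Prop :=
  exists c : 'I_n -> 'I_3, forall u v, E u v -> c u != c v.

Definition tup3 (A : Type) (a b c : A) : 'I_3 -> A :=
  fun i => nth a [:: a; b; c] i.
Definition tup6 (A : Type) (a b c d e f : A) : 'I_6 -> A :=
  fun i => nth a [:: a; b; c; d; e; f] i.

Definition satisfies_SigmaG (A : Type) (C : opset A) (n : nat) (E : rel 'I_n) : Prop :=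
  exists (F : 'I_n -> op A 3) (G : 'I_n -> 'I_n -> op A 6),
    (forall v, C 3 (F v)) /\
    (forall u v, E u v -> C 6 (G u v)) /\
    (forall u v, E u v -> forall x y z : A,
        F u (tup3 x y z) = G u v (tup6 x y x z y z) /\
        F v (tup3 x y z) = G u v (tup6 y x z x z y)).

(* Main.v *)
Require Import Defs.
From mathcomp Require Import all_boot.
From mathcomp Require classical_sets.
From Stdlib Require Import Classical ClassicalEpsilon FunctionalExtensionality.
Set Implicit Arguments. Unset Strict Implicit. Unset Printing Implicit Defensive.

Definition i0 : 'I_3 := @Ordinal 3 0 isT.
Definition i1 : 'I_3 := @Ordinal 3 1 isT.
Definition i2 : 'I_3 := @Ordinal 3 2 isT.

Lemma I3cases (x : 'I_3) : x = i0 \/ x = i1 \/ x = i2.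
Proof.
case: x => [[|[|[|m]]] Hm] //.
- by left; apply/val_inj.
- by right; left; apply/val_inj.
- by right; right; apply/val_inj.
Qed.

Lemma third (a b : 'I_3) : a != b -> exists c : 'I_3,
  [/\ c != a, c != b & forall x, [\/ x = a, x = b | x = c]].
Proof.
have H := I3cases.
case: (H a) => [->|[->|->]]; case: (H b) => [->|[->|->]] // _;
  [exists i2|exists i1|exists i2|exists i0|exists i1|exists i0]; split => //;
  move=> x; case: (H x) => [->|[->|->]]; by [constructor 1|constructor 2|constructor 3].
Qed.

Definition sw6 : 'I_6 -> 'I_6 := tup6 (@Ordinal 6 1 isT) (@Ordinal 6 0 isT) (@Ordinal 6 3 isT) (@Ordinal 6 2 isT) (@Ordinal 6 5 isT) (@Ordinal 6 4 isT).

Lemma sw6_ok (A : Type) (x y z : A) :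
  (fun i => tup6 y x z x z y (sw6 i)) = tup6 x y x z y z.
Proof.
apply: functional_extensionality => -[[|[|[|[|[|[|m]]]]]] Hm] //.
Qed.


Section GL.
Variables (n : nat) (h : ('I_n -> 'I_3) -> 'I_3).
Hypothesis hom : forall s t : 'I_n -> 'I_3, (forall k, s k != t k) -> h s != h t.
Hypothesis idem : forall a, h (fun _ => a) = a.

Definition tp (a b : 'I_3) (S : {set 'I_n}) : 'I_n -> 'I_3 :=
  fun k => if k \in S then a else b.

Lemma consv a b S : a != b -> h (tp a b S) = a \/ h (tp a b S) = b.
Proof.
move=> ab; have [c [ca cb all]] := third ab.
have : h (tp a b S) != c.
  rewrite -(idem c); apply: hom => k; rewrite /tp; case: (k \in S).
  - by rewrite eq_sym.
  - by rewrite eq_sym.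
by case: (all (h (tp a b S))) => [->|->|->]; [left|right|rewrite eqxx].
Qed.

Lemma swapW a b S : a != b -> (h (tp a b S) = a <-> h (tp b a S) = b).
Proof.
move=> ab; have Hh : h (tp a b S) != h (tp b a S).
  apply: hom => k; rewrite /tp; case: (k \in S) => //; by rewrite eq_sym.
split => E.
- case: (consv S (b:=a) (a:=b) _) => //; first by rewrite eq_sym.
  by move=> E'; move: Hh; rewrite E E' eqxx.
- case: (consv S ab) => // E'; by move: Hh; rewrite E E' eqxx.
Qed.

Lemma rotW a b c S : a != b -> b != c -> c != a ->
  h (tp a b S) = a -> h (tp c a S) = c.
Proof.
move=> ab bc ca E; have Hh : h (tp a b S) != h (tp c a S).
  apply: hom => k; rewrite /tp; case: (k \in S) => //; by rewrite eq_sym.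
case: (consv S ca) => // E'; by move: Hh; rewrite E E' eqxx.
Qed.

Lemma Wgen a b a' b' S : a != b -> a' != b' ->
  h (tp a b S) = a -> h (tp a' b' S) = a'.
Proof.
move=> ab a'b' E; have [c [ca cb all]] := third ab.
have ac : a != c by rewrite eq_sym.
have bc : b != c by rewrite eq_sym.
have ba : b != a by rewrite eq_sym.
have E1 : h (tp c a S) = c by apply: (rotW ab bc ca E).
have E2 : h (tp b c S) = b by apply: (rotW ca ab bc E1).
have E3 : h (tp b a S) = b by apply/(swapW _ ab).
have E4 : h (tp a c S) = a by apply/(swapW _ ca).
have E5 : h (tp c b S) = c by apply/(swapW _ bc).
move: a'b'; case: (all a') => ->; case: (all b') => ->; rewrite ?eqxx // => _.
Qed.

Definition W (S : {set 'I_n}) := h (tp i0 i1 S) = i0.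

Lemma tpC a b (S : {set 'I_n}) : tp a b (~: S) = tp b a S.
Proof. by apply: functional_extensionality => k; rewrite /tp in_setC; case: (k \in S). Qed.

Lemma Wcomp (S : {set 'I_n}) : W (~: S) <-> ~ W S.
Proof.
rewrite /W tpC; have sw := swapW S (a:=i0) (b:=i1) isT.
case: (consv S (a:=i1) (b:=i0) isT) => E; rewrite E.
- split => [/(f_equal val)//|H]; exfalso; apply: H; by apply/sw.
- split => // _ H; have := proj1 sw H; by rewrite E => /(f_equal val).
Qed.

Lemma Wup (S T : {set 'I_n}) : S \subset T -> W S -> W T.
Proof.
move=> ST WS; have Hh : h (tp i0 i1 S) != h (tp i2 i0 T).
  apply: hom => k; rewrite /tp; case kS: (k \in S).
  - by rewrite (subsetP ST _ kS).
  - by case: (k \in T).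
case: (consv T (a:=i2) (b:=i0) isT) => E.
- by apply: (Wgen (a:=i2) (b:=i0)).
- by move: Hh; rewrite WS E eqxx.
Qed.

Lemma WI (S T : {set 'I_n}) : W S -> W T -> W (S :&: T).
Proof.
move=> WS WT; apply: NNPP => nW; move/Wcomp: nW => WC.
have E1 : h (tp i0 i2 S) = i0 by apply: (Wgen (a:=i0) (b:=i1)).
have E2 : h (tp i1 i2 T) = i1 by apply: (Wgen (a:=i0) (b:=i1)).
have E3 : h (tp i2 i0 (~: (S :&: T))) = i2 by apply: (Wgen (a:=i0) (b:=i1)).
pose r := fun k => if k \in S then (if k \in T then i2 else i1) else i0.
have H1 : h r != h (tp i0 i2 S).
  by apply: hom => k; rewrite /r /tp; case: (k \in S); case: (k \in T).
have H2 : h r != h (tp i1 i2 T).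
  by apply: hom => k; rewrite /r /tp; case: (k \in S); case: (k \in T).
have H3 : h r != h (tp i2 i0 (~: (S :&: T))).
  by apply: hom => k; rewrite /r /tp in_setC in_setI; case: (k \in S); case: (k \in T).
move: H1 H2 H3; rewrite E1 E2 E3.
by case: (I3cases (h r)) => [->|[->|->]]; rewrite eqxx.
Qed.

Lemma WT : W setT.
Proof.
rewrite /W -{2}(idem i0); congr h.
by apply: functional_extensionality => k; rewrite /tp in_setT.
Qed.

Lemma Wprinc : exists i, W [set i].
Proof.
suff: forall k (S : {set 'I_n}), #|S| = k -> W S -> exists i, W [set i].
  by move/(_ _ setT erefl WT).
elim=> [|k IH] S cS WS.
- move/eqP: cS; rewrite cards_eq0 => /eqP S0.
  have : ~ W setT by apply/Wcomp; rewrite setCT -S0.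
  by move/(_ WT).
- have : 0 < #|S| by rewrite cS.
  case/card_gt0P => i iS.
  case: (classic (W [set i])) => Wi; first by exists i.
  apply: (IH (S :\ i)).
  + by move: cS; rewrite (cardsD1 i S) iS add1n => -[].
  + rewrite setDE; apply: WI => //; by apply/Wcomp.
Qed.

Lemma Wproj i : W [set i] -> forall s, h s = s i.
Proof.
move=> Wi s; case: (eqVneq (h s) (s i)) => // ne.
have [c [cb ca all]] := third ne.
pose T := [set k | s k != h s].
have WT' : W T.
  apply: (Wup _ Wi); apply/subsetP => k; rewrite !inE => /eqP ->.
  by rewrite eq_sym.
have E : h (tp (h s) c T) = h s.
  by apply: (Wgen (a:=i0) (b:=i1)) => //; rewrite eq_sym.
have : h s != h (tp (h s) c T).
  apply: hom => k; rewrite /tp inE; case: (eqVneq (s k) (h s)) => [->|ne'] /=.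
  - by rewrite eq_sym.
  - by [].
by rewrite E eqxx.
Qed.
End GL.

Lemma GL n (h : ('I_n -> 'I_3) -> 'I_3) :
  (forall s t : 'I_n -> 'I_3, (forall k, s k != t k) -> h s != h t) ->
  exists i, forall s, h s = h (fun _ => s i).
Proof.
move=> hom; pose p a := h (fun _ : 'I_n => a).
have pinj : injective p.
  move=> a b; apply: contra_eq => ab; by apply: hom.
pose h' s := invF pinj (h s).
have hom' : forall s t : 'I_n -> 'I_3, (forall k, s k != t k) -> h' s != h' t.
  move=> s t st; rewrite /h' (inj_eq (can_inj (f_invF pinj))); exact: hom.
have idem' : forall a, h' (fun _ => a) = a by move=> a; rewrite /h' invF_f.
have [i Wi] := Wprinc hom' idem'.
exists i => s; have := Wproj hom' idem' Wi s.
rewrite /h' => E; rewrite -E; exact: (esym (f_invF pinj (h s))).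
Qed.


Fixpoint inL {V : Type} (u : V) (L : seq V) : Prop :=
  match L with [::] => False | v :: L' => v = u \/ inL u L' end.

Lemma inL_catl {V : Type} (u : V) L1 L2 : inL u L1 -> inL u (L1 ++ L2).
Proof. elim: L1 => //= v L IH [->|H]; [by left|right; exact: IH]. Qed.

Lemma inL_catr {V : Type} (u : V) L1 L2 : inL u L2 -> inL u (L1 ++ L2).
Proof. elim: L1 => //= v L IH H; right; exact: IH. Qed.

Section Compact.
Variables (V : Type) (E : V -> V -> Prop).
Definition okc (L : seq V) (c : V -> 'I_3) :=
  forall u v, inL u L -> inL v L -> E u v -> c u <> c v.

Lemma okc_sub L L' c : (forall u, inL u L -> inL u L') -> okc L' c -> okc L c.
Proof. move=> sub ok u v uL vL; apply: ok; exact: sub. Qed.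

Hypothesis Hfin : forall L, exists c, okc L c.

Definition funcR (R : V * 'I_3 -> Prop) :=
  forall u a b, R (u,a) -> R (u,b) -> a = b.
Definition extR (R : V * 'I_3 -> Prop) := forall L, exists c, okc L c /\
  (forall u a, inL u L -> R (u,a) -> c u = a).
Definition PP R := funcR R /\ extR R.

Lemma compact3 : exists c : V -> 'I_3, forall u v, E u v -> c u <> c v.
Proof.
have [A [[fA eA] maxA]] : exists A, PP A /\ forall B, classical_sets.proper A B -> ~ PP B.
  apply: classical_sets.Zorn_bigcup => F FP tot.
  set U := classical_sets.bigcup _ _.
  have fU : funcR U.
    move=> u a b [X FX Xa] [Y FY Yb].
    case: (tot X Y FX FY) => [XY|YX].
    - exact: (proj1 (FP Y FY)) u a b (XY _ Xa) Yb.
    - exact: (proj1 (FP X FX)) u a b Xa (YX _ Yb).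
  split => //.
  case: (classic (exists X, F X)) => [[X0 FX0]|nF].
  - have key : forall L, exists X, F X /\ forall u a, inL u L -> U (u,a) -> X (u,a).
      elim => [|v L [X [FX HX]]]; first by exists X0.
      case: (classic (exists a, U (v,a))) => [[a Ua]|nv].
      + case: (Ua) => Y FY Ya.
        case: (tot X Y FX FY) => [XY|YX].
        * exists Y; split => // u b [<-|uL] Ub.
          -- by rewrite (fU _ _ _ Ub Ua).
          -- apply: XY; exact: HX.
        * exists X; split => // u b [<-|uL] Ub.
          -- rewrite (fU _ _ _ Ub Ua); exact: YX.
          -- exact: HX.
      + exists X; split => // u b [<-|uL] Ub.
        * by exfalso; apply: nv; exists b.
        * exact: HX.
    move=> L; have [X [FX HX]] := key L.
    have [c [cok cX]] := (proj2 (FP X FX)) L.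
    exists c; split => // u a uL Ua; apply: cX => //; exact: HX.
  - move=> L; have [c cok] := Hfin L; exists c; split => // u a _ [X FX _].
    by exfalso; apply: nF; exists X.
have tot : forall v, exists a, A (v,a).
  move=> v; apply: NNPP => nv.
  have nB : forall a, exists L, forall c, okc L c ->
      ~ (forall u b, inL u L -> (A (u,b) \/ (u,b) = (v,a)) -> c u = b).
    move=> a; pose B := fun p => A p \/ p = (v,a).
    have nPB : ~ PP B.
      apply: maxA; split; first by move=> p Ap; left.
      move=> BA; apply: nv; exists a; apply: BA; by right.
    have fB : funcR B.
      move=> u b b' [Ab|[eu eb]] [Ab'|[eu' eb']].
      + exact: fA Ab Ab'.
      + by exfalso; apply: nv; exists b; rewrite -eu'.
      + by exfalso; apply: nv; exists b'; rewrite -eu.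
      + by rewrite eb eb'.
    apply: NNPP => nL; apply: nPB; split => // L; apply: NNPP => nc.
    apply: nL; exists L => c cok cB; apply: nc; by exists c.
  have [L0 H0] := nB i0; have [L1 H1] := nB i1; have [L2 H2] := nB i2.
  have [c [cok cA]] := eA (v :: L0 ++ L1 ++ L2).
  have s0 : forall u, inL u L0 -> inL u (v :: L0 ++ L1 ++ L2).
    by move=> u uL; right; apply: inL_catl.
  have s1 : forall u, inL u L1 -> inL u (v :: L0 ++ L1 ++ L2).
    by move=> u uL; right; apply: inL_catr; apply: inL_catl.
  have s2 : forall u, inL u L2 -> inL u (v :: L0 ++ L1 ++ L2).
    by move=> u uL; right; apply: inL_catr; apply: inL_catr.
  case: (I3cases (c v)) => [cv|[cv|cv]];
    [apply: (H0 c (okc_sub s0 cok)) | apply: (H1 c (okc_sub s1 cok))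
    | apply: (H2 c (okc_sub s2 cok))] => u b uL [Ab|[-> ->]] //;
    [exact: cA (s0 _ uL) Ab | exact: cA (s1 _ uL) Ab | exact: cA (s2 _ uL) Ab].
have [col Hcol] : exists col : V -> 'I_3, forall v, A (v, col v).
  exists (fun v => proj1_sig (constructive_indefinite_description _ (tot v))).
  move=> v; exact: proj2_sig (constructive_indefinite_description _ (tot v)).
exists col => u v Euv.
have [c [cok cA]] := eA [:: u; v].
have cu : c u = col u by apply: (cA u (col u) _ (Hcol u)); left.
have cv : c v = col v by apply: (cA v (col v) _ (Hcol v)); right; left.
rewrite -cu -cv; apply: cok => //=; [by left | by right; left].
Qed.
End Compact.


Definition o6 (k : nat) (H : k < 6) : 'I_6 := Ordinal H.

Definition pos (a b : 'I_3) : 'I_6 :=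
  match nat_of_ord a, nat_of_ord b with
  | 0, 1 => @o6 0 isT | 1, 0 => @o6 1 isT | 0, 2 => @o6 2 isT
  | 2, 0 => @o6 3 isT | 1, 2 => @o6 4 isT | 2, 1 => @o6 5 isT
  | _, _ => @o6 0 isT end.

Lemma pos_ok (A : Type) (a b : 'I_3) (x y z : A) : a != b ->
  tup6 x y x z y z (pos a b) = tup3 x y z a /\ tup6 y x z x z y (pos a b) = tup3 x y z b.
Proof.
by case: (I3cases a) => [->|[->|->]]; case: (I3cases b) => [->|[->|->]].
Qed.

Lemma sw6_ok' (A : Type) (x y z : A) :
  (fun i => tup6 x y x z y z (sw6 i)) = tup6 y x z x z y.
Proof.
apply: functional_extensionality => -[[|[|[|[|[|[|m]]]]]] Hm] //.
Qed.

Definition Eop (A : Type) (C : opset A) (t t' : op A 3) := exists g, C 6 g /\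
  forall x y z : A, t (tup3 x y z) = g (tup6 x y x z y z) /\
                    t' (tup3 x y z) = g (tup6 y x z x z y).
Definition EC (A : Type) (C : opset A) (t t' : op A 3) :=
  [/\ C 3 t, C 3 t' & Eop C t t'].

Lemma minor_in (A : Type) (C : opset A) (Hc : is_clone C) n k (pi : 'I_n -> 'I_k) f :
  C n f -> C k (minor pi f).
Proof.
move=> Cf; exact: (proj2 Hc n k f (fun i => fun y => y (pi i)) Cf (fun i => proj1 Hc k (pi i))).
Qed.

Lemma Eop_sym (A : Type) (C : opset A) (Hc : is_clone C) t t' : Eop C t t' -> Eop C t' t.
Proof.
move=> [g [Cg Hg]]; exists (minor sw6 g); split; first exact: minor_in.
move=> x y z; rewrite /minor sw6_ok sw6_ok'; have [-> ->] := Hg x y z; by split.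
Qed.

Lemma K3edge (A : Type) (C : opset A) (Hc : is_clone C) n (f : op A n) (s t : 'I_n -> 'I_3) :
  C n f -> (forall k, s k != t k) -> Eop C (minor s f) (minor t f).
Proof.
move=> Cf st; exists (minor (fun k => pos (s k) (t k)) f); split; first exact: minor_in.
move=> x y z; rewrite /minor; split; congr f; apply: functional_extensionality => k;
  by have [E1 E2] := pos_ok x y z (st k); rewrite ?E1 ?E2.
Qed.

Definition Dh n (h : ('I_n -> 'I_3) -> 'I_3) (i : 'I_n) :=
  forall s, h s = h (fun _ => s i).

Lemma Duniq n (h : ('I_n -> 'I_3) -> 'I_3) i j :
  (forall s t : 'I_n -> 'I_3, (forall k, s k != t k) -> h s != h t) ->
  Dh h i -> Dh h j -> i = j.
Proof.
move=> hom Di Dj; apply: NNPP => ij.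
pose s := fun k : 'I_n => if k == i then i0 else i1.
have e1 := Di s; have e2 := Dj s.
have : h (fun _ => i0) != h (fun _ => i1) by apply: hom.
rewrite /s eqxx in e1; rewrite /s in e2.
have ji : (j == i) = false by apply/negbTE/eqP => E; apply: ij.
rewrite ji in e2.
by rewrite -e1 -e2 eqxx.
Qed.

Unset Implicit Arguments.
Section Minion.
Variables (A : Type) (C : opset A) (Hc : is_clone C) (col : op A 3 -> 'I_3).
Hypothesis Hcol : forall t t', EC C t t' -> col t <> col t'.

Definition hf n (f : op A n) (s : 'I_n -> 'I_3) := col (minor s f).

Lemma homf (n : nat) (f : op A n) : C n f ->
  forall s t : 'I_n -> 'I_3, (forall k, s k != t k) -> hf n f s != hf n f t.
Proof.
move=> Cf s t st; apply/eqP; apply: Hcol; split; [exact: (minor_in Hc s Cf)|exact: (minor_in Hc t Cf)|].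
exact: (K3edge Hc Cf st).
Qed.

Definition sel n (f : op A n) : option 'I_n :=
  match excluded_middle_informative (exists i, Dh (hf n f) i) with
  | left p => Some (proj1_sig (constructive_indefinite_description _ p))
  | right _ => None end.

Definition xi n (f : op A n) : op bool n :=
  fun x => match sel n f with Some i => x i | None => false end.

Lemma selP (n : nat) (f : op A n) : C n f -> exists i, sel n f = Some i /\ Dh (hf n f) i.
Proof.
move=> Cf; rewrite /sel; case: excluded_middle_informative => [p|np].
- eexists; split; first reflexivity.
  exact: proj2_sig (constructive_indefinite_description _ p).
- exfalso; apply: np; exact: GL (homf n f Cf).
Qed.

Lemma xi_hom : minion_hom C proj_clone xi.
Proof.
split.
- move=> n f Cf; have [i [si _]] := selP n f Cf; exists i => x; by rewrite /xi si.
- move=> n k pi f Cf x; have Cf' := minor_in Hc pi Cf.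
  have [i [si Di]] := selP n f Cf; have [j [sj Dj]] := selP k _ Cf'.
  have Dpi : Dh (hf k (minor pi f)) (pi i) by move=> s; exact: (Di (fun j => s (pi j))).
  have ej : j = pi i by exact: (Duniq (homf _ _ Cf') Dj Dpi).
  by rewrite /minor /xi si sj ej.
Qed.
End Minion.
Set Implicit Arguments.


Lemma inL_nth (V : Type) (d u : V) (L : seq V) : inL u L -> exists i : 'I_(size L), nth d L i = u.
Proof.
elim: L => //= v L IH [<-|uL].
- by exists ord0.
- have [i Hi] := IH uL; by exists (lift ord0 i); rewrite lift0.
Qed.

Definition pb (P : Prop) : bool := if excluded_middle_informative P then true else false.
Lemma pbP (P : Prop) : pb P <-> P.
Proof. by rewrite /pb; case: excluded_middle_informative. Qed.

Theorem lemma3p5 (A : Type) (C : opset A) :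
  is_clone C ->
  ~ (exists xi : forall n, op A n -> op bool n, minion_hom C proj_clone xi) ->
  exists (n : nat) (E : rel 'I_n),
    graph_sym E /\ ~ three_colorable E /\ satisfies_SigmaG C E.
Proof.
move=> Hc Hno; apply: NNPP => Hng.
pose proj3 : op A 3 := fun x => x i0.
have Cp3 : C 3 proj3 by exact: (proj1 Hc 3 i0).
have Hfin : forall L : seq (op A 3), exists c, okc (EC C) L c.
  move=> L; apply: NNPP => nc; apply: Hng.
  pose fixC (t : op A 3) := if excluded_middle_informative (C 3 t) then t else proj3.
  pose m := size L.
  pose f (i : 'I_m) := fixC (nth proj3 L i).
  have fC : forall i, C 3 (f i).
    by move=> i; rewrite /f /fixC; case: excluded_middle_informative.
  pose Eb (i j : 'I_m) : bool := pb (EC C (f i) (f j)).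
  exists m, Eb; split; last split.
  - move=> i j /pbP [Ci Cj Ee]; apply/pbP; split => //; exact: Eop_sym.
  - move=> [c' Hc']; apply: nc.
    pose c (u : op A 3) : 'I_3 :=
      match excluded_middle_informative (exists i, f i = u) with
      | left p => c' (proj1_sig (constructive_indefinite_description _ p))
      | right _ => i0 end.
    have cdef : forall u, inL u L -> C 3 u -> exists i, f i = u /\ c u = c' i.
      move=> u uL Cu; rewrite /c; case: excluded_middle_informative => [p|np].
      + exists (proj1_sig (constructive_indefinite_description _ p)); split => //.
        exact: proj2_sig (constructive_indefinite_description _ p).
      + exfalso; apply: np; have [i Hi] := inL_nth proj3 uL; exists i.
        by rewrite /f Hi /fixC; case: excluded_middle_informative.
    exists c => u v uL vL [Cu Cv Euv].
    have [iu [fu cu]] := cdef u uL Cu; have [iv [fv cv]] := cdef v vL Cv.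
    rewrite cu cv; apply/eqP; apply: Hc'; apply/pbP; rewrite fu fv; by split.
  - pose p6 : op A 6 := fun x => x ord0.
    exists f, (fun i j => epsilon (inhabits p6) (fun g => C 6 g /\
      forall x y z : A, f i (tup3 x y z) = g (tup6 x y x z y z) /\
                        f j (tup3 x y z) = g (tup6 y x z x z y))).
    split => //; split.
    + move=> u v /pbP [_ _ Ee]; exact: (proj1 (epsilon_spec (inhabits p6) _ Ee)).
    + move=> u v /pbP [_ _ Ee]; exact: (proj2 (epsilon_spec (inhabits p6) _ Ee)).
have [col Hcol] := compact3 Hfin.
apply: Hno; exists (xi _ col); exact: (xi_hom _ _ Hc _ Hcol).
Qed.
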